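(* Let $q=p^e$ with $p$ an odd prime and $e\ge1$, let $m\ge3$ be odd, $D=\{x\in\mathbb{F}_{q^m}:\mathrm{Tr}_{q^m/q}(x^2)=0\}=\{d_1,\dots,d_n\}$, and $\overline{\mathcal{C}_D}=\{(\mathrm{Tr}_{q^m/q}(bx)+c)_{x\in D}:b\in\mathbb{F}_{q^m},c\in\mathbb{F}_q\}$. Let $\alpha$ generate $\mathbb{F}_{q^m}^*$ and let $G_2$ be the generator matrix of $\overline{\mathcal{C}_D}$ whose first row is $(1,\dots,1)$, second row $(\mathrm{Tr}_{q^m/q}(d_j))_j$, third row $(\mathrm{Tr}_{q^m/q}(\alpha d_j)+1)_j$, and $(i+2)$-th row $(\mathrm{Tr}_{q^m/q}(\alpha^id_j))_j$ for $2\le i\le m-1$. Let $\overline{\mathcal{C}_D}'$ be the code generated by $[I_{m+1}:G_2]$. Then $\overline{\mathcal{C}_D}$ is an almost optimally or optimally extendable code, i.e. $0\le d(\overline{\mathcal{C}_D}^{\perp})-d(\overline{\mathcal{C}_D}'^{\perp})\le1$.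
   Context: $d(\cdot)$ denotes minimum distance. For a linear code $\mathcal{C}$ with $k\times n$ generator matrix $G$ and $\mathcal{C}'$ generated by $[I_k:G]$, $\mathcal{C}$ is optimally extendable if $d(\mathcal{C}'^{\perp})=d(\mathcal{C}^{\perp})$ and almost optimally extendable if $d(\mathcal{C}'^{\perp})=d(\mathcal{C}^{\perp})-1$. *)

(* Defs.v *)
(* All objects live inside the finite field L = F_{q^m};
   F_q is the subfield {x | x^q = x}. *)
From HB Require Import structures.
From mathcomp Require Import all_boot all_order all_algebra.
Unset Printing Implicit Defensive.
Import GRing.Theory.
Local Open Scope ring_scope.

Definition trq (L : finFieldType) (q m : nat) (x : L) : L :=
  \sum_(i < m) x ^+ (q ^ i).

Definition inFq (L : finFieldType) (q : nat) (x : L) : bool := x ^+ q == x.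

Definition wt (L : finFieldType) (n : nat) (v : 'rV[L]_n) : nat :=
  #|[set j : 'I_n | v 0 j != 0]|.

(* minimum distance: least weight of a nonzero codeword
   (convention: n if there is none) *)
Definition mindist (L : finFieldType) (n : nat) (C : {set 'rV[L]_n}) : nat :=
  \big[minn/n]_(c in C | c != 0) wt L n c.

Definition dualq (L : finFieldType) (q n : nat) (C : {set 'rV[L]_n}) :
  {set 'rV[L]_n} :=
  [set y : 'rV[L]_n | [forall j, inFq L q (y 0 j)] &&
                      [forall c in C, y *m c^T == 0]].

Definition span_code (L : finFieldType) (q k n : nat) (M : 'M[L]_(k, n)) :
  {set 'rV[L]_n} :=
  [set v : 'rV[L]_n | [exists u : 'rV[L]_k,
      [forall i, inFq L q (u 0 i)] && (v == u *m M)]].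

Definition Dset (L : finFieldType) (q m : nat) : {set L} :=
  [set x : L | trq L q m (x ^+ 2) == 0].

Definition dj (L : finFieldType) (q m : nat) (j : 'I_#|Dset L q m|) : L :=
  @enum_val L (mem (Dset L q m)) j.

Definition CDbar (L : finFieldType) (q m : nat) : {set 'rV[L]_#|Dset L q m|} :=
  [set v | [exists b : L, exists c : L,
      inFq L q c && (v == \row_j (trq L q m (b * dj L q m j) + c))]].

(* the generator matrix G_2 (rows indexed 0..m) *)
Definition G2 (L : finFieldType) (q m : nat) (alpha : L) :
  'M[L]_(m.+1, #|Dset L q m|) :=
  \matrix_(i < m.+1, j < #|Dset L q m|)
    if (i : nat) == 0%N then 1
    else if (i : nat) == 1%N then trq L q m (dj L q m j)
    else if (i : nat) == 2%N then trq L q m (alpha * dj L q m j) + 1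
    else trq L q m (alpha ^+ (i.-1) * dj L q m j).

(* Main.v *)
Require Import Defs.
From HB Require Import structures.
From mathcomp Require Import all_boot all_order all_algebra finfield.
Import GRing.Theory.
Local Open Scope ring_scope.
Set Implicit Arguments.
Unset Strict Implicit.

Section Frob.
Variables (L : finFieldType) (p : nat).
Hypothesis Hp : p \in [pchar L].

Lemma frobD n (x y : L) : (x + y) ^+ (p ^ n) = x ^+ (p ^ n) + y ^+ (p ^ n).
Proof.
elim: n => [|n IH]; first by rewrite !expn0 !expr1.
by rewrite expnSr !exprM IH -!(pFrobenius_autE Hp) rmorphD.
Qed.

Lemma frobN n (x : L) : (- x) ^+ (p ^ n) = - x ^+ (p ^ n).
Proof.
elim: n => [|n IH]; first by rewrite !expn0 !expr1.
by rewrite expnSr !exprM IH -!(pFrobenius_autE Hp) rmorphN.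
Qed.

Lemma frob_nat n k : (k%:R : L) ^+ (p ^ n) = k%:R.
Proof.
elim: n => [|n IH]; first by rewrite !expn0 !expr1.
by rewrite expnSr !exprM IH -!(pFrobenius_autE Hp) pFrobenius_aut_nat.
Qed.

Lemma p_gt0 : (0 < p)%N.
Proof. by rewrite prime_gt0 // (pcharf_prime Hp). Qed.

Lemma frob_sum n k (F : 'I_k -> L) :
  (\sum_(i < k) F i) ^+ (p ^ n) = \sum_(i < k) F i ^+ (p ^ n).
Proof.
elim: k F => [|k IH] F; first by rewrite !big_ord0 expr0n eqn0Ngt expn_gt0 p_gt0.
by rewrite !big_ord_recr /= frobD IH.
Qed.

End Frob.
Section Tr.
Variables (L : finFieldType) (p e m : nat).
Hypothesis Hp : p \in [pchar L].
Local Notation q := (p ^ e)%N.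
Local Notation tr := (trq L (p ^ e)%N m).

Lemma qpow_gt0 i : (0 < q ^ i)%N.
Proof. by rewrite !expn_gt0 (p_gt0 Hp). Qed.

Lemma trqD x y : tr (x + y) = tr x + tr y.
Proof. by rewrite /trq -big_split; apply: eq_bigr => i _; rewrite -expnM (frobD Hp). Qed.

Lemma trqN x : tr (- x) = - tr x.
Proof. by rewrite /trq -sumrN; apply: eq_bigr => i _; rewrite -expnM (frobN Hp). Qed.

Lemma trq0 : tr 0 = 0.
Proof. by rewrite /trq big1 // => i _; rewrite expr0n eqn0Ngt qpow_gt0. Qed.

Lemma trq_Fq x : #|L| = (q ^ m)%N -> (0 < m)%N -> (tr x) ^+ q = tr x.
Proof.
case: m => // m' cL _.
rewrite /trq (frob_sum Hp).
under eq_bigr => i _ do rewrite -exprM -expnSr.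
rewrite big_ord_recr big_ord_recl /= -cL expf_card expn0 expr1 addrC.
by congr (_ + _); apply: eq_bigr.
Qed.

End Tr.

Lemma odd_geom (q k : nat) : odd q -> odd (\sum_(i < k) q ^ i)%N = odd k.
Proof.
move=> oq; elim: k => [|k IH]; first by rewrite big_ord0.
by rewrite big_ord_recr /= oddD IH oddX oq orbT /= addbT.
Qed.

Lemma exists_iso (L : finFieldType) p e m (alpha : L) :
  p \in [pchar L] -> odd p -> (0 < e)%N -> (2 <= m)%N -> odd m ->
  #|L| = ((p ^ e) ^ m)%N -> (#|L|.-1).-primitive_root alpha ->
  exists2 x : L, x != 0 & trq L (p ^ e) m (x ^+ 2) = 0.
Proof.
move=> Hp op e_gt0 m_ge2 om cL prim.
have p_gt1 : (1 < p)%N by rewrite prime_gt1 // (pcharf_prime Hp).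
set q := (p ^ e)%N.
have q_odd : odd q by rewrite oddX op orbT.
have q_gt1 : (1 < q)%N by apply: (leq_trans p_gt1); rewrite -{1}(expn1 p) leq_pexp2l // ltnW.
have q_gt0 : (0 < q)%N by apply: ltnW.
pose S := [set z : L | z ^+ q == z].
have S_card : (#|S| <= q)%N.
  pose P : {poly L} := 'X^q - 'X.
  have sP : size P = q.+1 by rewrite size_polyDl ?size_polyXn // size_polyN size_polyX ltnS.
  have := @max_poly_roots _ P (enum S).
  rewrite -cardE sP ltnS; apply.
  - by rewrite -size_poly_eq0 sP.
  - by apply/allP => z; rewrite mem_enum inE rootE !hornerE subr_eq0.
  - exact: enum_uniq.
have m_gt0 : (0 < m)%N by apply: leq_trans m_ge2.
have ninj : ~~ injectiveb (trq L q m).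
  apply/negP => /injectiveP inj.
  have := card_imset [set: L] inj; rewrite cardsT => cI.
  have : (#|L| <= q)%N.
    rewrite -cI; apply: leq_trans S_card; apply: subset_leq_card.
    by apply/subsetP => _ /imsetP [x _ ->]; rewrite inE trq_Fq.
  have : (q ^ 1 < q ^ m)%N by rewrite ltn_exp2l.
  by rewrite expn1 cL => h; rewrite leqNgt h.
case/injectivePn: ninj => x [y nxy exy].
pose k := x - y.
have kn0 : k != 0 by rewrite subr_eq0.
have trk : trq L q m k = 0 by rewrite /k trqD // trqN // exy subrr.
set N := #|L|.-1.
have L_gt0 : (0 < #|L|)%N by apply/card_gt0P; exists 0.
have kN : k ^+ N = 1.
  by apply: (mulfI kn0); rewrite mulr1 -exprS prednK ?expf_card.
case: (prim_rootP prim kN) => i ki.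
pose s := (\sum_(i < m) q ^ i)%N.
have Ns : N = (q.-1 * s)%N by rewrite /N cL predn_exp.
pose a := alpha ^+ s.
have aq : a ^+ q = a.
  rewrite /a -exprM.
  have -> : (s * q = s * q.-1 + s)%N by rewrite -mulnSr prednK.
  rewrite exprD mulnC -Ns.
  by rewrite (prim_expr_order prim) mul1r.
have aqn n : a ^+ (q ^ n) = a.
  by elim: n => [|n IH]; rewrite ?expn0 ?expr1 // expnS exprM aq IH.
have tra z : trq L q m (a * z) = a * trq L q m z.
  by rewrite /trq mulr_sumr; apply: eq_bigr => j _; rewrite exprMn aqn.
have os : odd s by rewrite /s odd_geom.
have an0 : alpha != 0.
  have N_gt0 : (0 < N)%N by rewrite Ns muln_gt0 -ltnS prednK // q_gt1 odd_gt0.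
  apply/negP => /eqP a0; move: (prim_expr_order prim); rewrite a0 expr0n.
  by rewrite (gtn_eqF N_gt0) => /eqP; rewrite eq_sym oner_eq0.
case oi: (odd i).
- exists (alpha ^+ ((i + s)./2)); first by rewrite expf_neq0.
  rewrite -exprM muln2.
  move: (odd_double_half (i + s)); rewrite oddD oi os /= add0n => ->.
  by rewrite exprD -ki mulrC -/a tra trk mulr0.
- exists (alpha ^+ (i./2)); first by rewrite expf_neq0.
  rewrite -exprM muln2.
  by move: (odd_double_half i); rewrite oi add0n => ->; rewrite -ki.
Qed.

Lemma mindist_le (L : finFieldType) n (C : {set 'rV[L]_n}) c :
  c \in C -> c != 0 -> (mindist L n C <= wt L n c)%N.
Proof.
move=> cC cn0; rewrite /mindist.
have : c \in index_enum 'rV[L]_n by rewrite mem_index_enum.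
elim: (index_enum _) => // a r IH; rewrite inE big_cons.
case/orP => [/eqP <-|cr]; first by rewrite cC cn0 geq_minl.
by case: ifP => _; rewrite ?geq_min IH ?orbT.
Qed.

Lemma mindist_ge (L : finFieldType) n (C : {set 'rV[L]_n}) b :
  (b <= n)%N -> (forall c, c \in C -> c != 0 -> (b <= wt L n c)%N) ->
  (b <= mindist L n C)%N.
Proof.
move=> bn H; rewrite /mindist; apply: (big_ind (fun x => b <= x)%N) => //.
- by move=> x y bx By; rewrite leq_min bx.
- by move=> c /andP [cC cn0]; apply: H.
Qed.

Lemma wt_le (L : finFieldType) n (y : 'rV[L]_n) : (wt L n y <= n)%N.
Proof. by apply: leq_trans (max_card _) _; rewrite card_ord. Qed.

Lemma wt_row_mx0 (L : finFieldType) k n (y : 'rV[L]_n) :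
  wt L (k + n) (row_mx (0 : 'rV[L]_k) y) = wt L n y.
Proof.
rewrite /wt -!sum1dep_card big_split_ord /=.
rewrite big1 ?add0n => [|i]; last by rewrite row_mxEl mxE eqxx.
by apply: eq_bigl => i; rewrite row_mxEr.
Qed.

Lemma row_mx0_neq0 (L : finFieldType) k n (y : 'rV[L]_n) :
  y != 0 -> row_mx (0 : 'rV[L]_k) y != 0.
Proof.
apply: contra => /eqP; rewrite -row_mx0 => /eq_row_mx [_ ->]; exact: eqxx.
Qed.

Lemma rowG2_in (L : finFieldType) q m (alpha : L) (i : 'I_m.+1) :
  (0 < q)%N -> trq L q m 0 = 0 -> row i (G2 L q m alpha) \in CDbar L q m.
Proof.
move=> q_gt0 tr0; rewrite inE; apply/existsP.
exists (if (i : nat) == 0%N then 0 else if (i : nat) == 1%N then 1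
        else if (i : nat) == 2%N then alpha else alpha ^+ (i.-1)).
apply/existsP; exists (if ((i : nat) == 0%N) || ((i : nat) == 2%N) then 1 else 0).
apply/andP; split.
  by case: ifP => _; rewrite /inFq ?expr1n // expr0n eqn0Ngt q_gt0.
apply/eqP/matrixP => a j; rewrite !mxE.
by case: i => [[|[|[|i']]] Hi] /=; rewrite ?mul0r ?tr0 ?add0r ?mul1r ?addr0.
Qed.

Lemma dual_lift (L : finFieldType) q m (alpha : L) (y : 'rV[L]_#|Dset L q m|) :
  (0 < q)%N -> trq L q m 0 = 0 ->
  y \in dualq L q _ (CDbar L q m) ->
  row_mx (0 : 'rV[L]_m.+1) y \in
    dualq L q _ (span_code L q _ _ (row_mx 1%:M (G2 L q m alpha))).
Proof.
move=> q_gt0 tr0; rewrite !inE => /andP [/forallP yF /forall_inP yC].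
apply/andP; split.
  apply/forallP => j; rewrite mxE; case: splitP => k _; last exact: yF.
  by rewrite mxE /inFq expr0n eqn0Ngt q_gt0.
apply/forall_inP => c; rewrite inE => /existsP [u /andP [_ /eqP ->]].
have yG : y *m (G2 L q m alpha)^T = 0.
  apply/matrixP => a i; rewrite (ord1 a) !mxE.
  move: (yC _ (rowG2_in alpha i q_gt0 tr0)) => /eqP/matrixP/(_ 0 0).
  rewrite !mxE => H; apply: etrans H; apply: eq_bigr => j _; by rewrite !mxE.
by rewrite trmx_mul mulmxA tr_row_mx mul_row_col mul0mx add0r yG mul0mx.
Qed.

Lemma dual_wt2 (L : finFieldType) q m (alpha : L)
  (z : 'rV[L]_(m.+1 + #|Dset L q m|)) :
  (0 < q)%N ->
  z \in dualq L q _ (span_code L q _ _ (row_mx 1%:M (G2 L q m alpha))) ->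
  z != 0 -> (2 <= wt L _ z)%N.
Proof.
move=> q_gt0; rewrite inE => /andP [_ /forall_inP zC] zn0.
have colM : forall k, exists i, (row_mx 1%:M (G2 L q m alpha)) i k = 1.
  move=> k; rewrite -(splitK k); case: (split k) => j /=.
  - by exists j; rewrite row_mxEl mxE eqxx.
  - by exists 0; rewrite row_mxEr mxE.
have [k zk] : exists k, z 0 k != 0.
  apply/existsP; rewrite -negb_forall; apply: contra zn0 => /forallP H.
  apply/eqP/matrixP => a j; rewrite (ord1 a) mxE; by move/eqP: (H j).
case: (colM k) => i Mi.
rewrite leqNgt; apply/negP => w1.
have others : forall j, j != k -> z 0 j = 0.
  move=> j jk; apply/eqP; apply: contraTT w1 => zj; rewrite -leqNgt.
  have : (#|[set j; k]| <= wt L _ z)%N.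
    by apply: subset_leq_card; apply/subsetP => l; rewrite !inE => /orP [] /eqP ->.
  by rewrite cards2 jk.
have rS : row i (row_mx 1%:M (G2 L q m alpha)) \in
    span_code L q _ _ (row_mx 1%:M (G2 L q m alpha)).
  rewrite inE; apply/existsP; exists (delta_mx 0 i); rewrite rowE eqxx andbT.
  apply/forallP => l; rewrite mxE /inFq.
  by case: (_ && _); rewrite /= ?expr1n // expr0n eqn0Ngt q_gt0.
move: (zC _ rS) => /eqP/matrixP/(_ 0 0); rewrite [in RHS]mxE.
rewrite mxE (bigD1 k) //= big1 => [|j jk]; last by rewrite others // mul0r.
rewrite addr0 mxE mxE Mi mulr1 => /eqP; exact/negP.
Qed.

Unset Implicit Arguments.
Set Strict Implicit.

Theorem theorem3p20 (p e m : nat) (L : finFieldType) (alpha : L) :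
  prime p -> odd p -> (0 < e)%N -> (3 <= m)%N -> odd m ->
  #|L| = ((p ^ e) ^ m)%N ->
  (#|L|.-1).-primitive_root alpha ->
  let q := (p ^ e)%N in
  let dC := mindist L _ (dualq L q _ (CDbar L q m)) in
  let dC' := mindist L _ (dualq L q _ (span_code L q _ _ (row_mx 1%:M (G2 L q m alpha)))) in
  (dC' <= dC <= dC'.+1)%N.
Proof.
move=> pr op e_gt0 m_ge3 om cL prim; cbv zeta; set q := (p ^ e)%N.
have Hp : p \in [pchar L] by apply: (card_finPcharP (n := (e * m)%N)); rewrite // expnM.
have q_gt0 : (0 < q)%N by rewrite expn_gt0 prime_gt0.
have tr0 : trq L q m 0 = 0 by apply: trq0.
have [x xn0 trx] := exists_iso Hp op e_gt0 (ltnW m_ge3) om cL prim.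
pose D := Dset L q m.
have D0 : (0 : L) \in D by rewrite inE expr0n /= tr0.
have Dx : x \in D by rewrite inE trx.
have Dnx : - x \in D by rewrite inE sqrrN trx.
have two_n0 : (2%:R : L) != 0.
  rewrite -(dvdn_pcharf Hp); apply/negP => /(dvdn_leq (isT : (0 < 2)%N)) le2.
  have p2 : p = 2%N by apply/eqP; rewrite eqn_leq le2 prime_gt1.
  by rewrite p2 in op.
have xnx : x != - x.
  apply: contra two_n0 => /eqP h.
  have : x *+ 2 = 0 by rewrite mulr2n {1}h addNr.
  by move/eqP; rewrite -(mulr_natl x 2) mulf_eq0 (negbTE xn0) orbF.
pose f (d : L) : L := if d == 0 then - 2%:R else if (d == x) || (d == - x) then 1 else 0.
pose y3 : 'rV[L]_#|D| := \row_j f (dj L q m j).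
pose i0 := enum_rank_in D0 0.
pose i1 := enum_rank_in D0 x.
pose i2 := enum_rank_in D0 (- x).
have y3n0 : y3 != 0.
  apply/negP => /eqP/matrixP/(_ 0 i1); rewrite !mxE /dj /i1 enum_rankK_in //.
  by rewrite /f (negbTE xn0) eqxx /= => /eqP; rewrite oner_eq0.
have wt3 : (wt L _ y3 <= 3)%N.
  apply: leq_trans (_ : #|[:: i0; i1; i2]| <= 3)%N.
    apply: subset_leq_card; apply/subsetP => j; rewrite !inE mxE /f.
    have ej : j = enum_rank_in D0 (dj L q m j) by rewrite /dj enum_valK_in.
    rewrite -/(dj L q m j).
    have [d0|dn0] := eqVneq (dj L q m j) 0; first by rewrite ej d0 /i0 eqxx.
    have [dx|dnx] := eqVneq (dj L q m j) x; first by rewrite ej dx /i1 eqxx orbT.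
    have [dmx|dnmx] := eqVneq (dj L q m j) (- x); first by rewrite ej dmx /i2 eqxx !orbT.
    by rewrite eqxx.
  exact: card_size.
have y3D : y3 \in dualq L q _ (CDbar L q m).
  rewrite inE; apply/andP; split.
    apply/forallP => j; rewrite mxE /f /inFq.
    case: ifP => _; first by rewrite /q (frobN Hp) (frob_nat Hp).
    by case: ifP => _; rewrite ?expr1n // expr0n eqn0Ngt q_gt0.
  apply/forall_inP => c; rewrite inE => /existsP [b /existsP [c0 /andP [_ /eqP ->]]].
  apply/eqP/matrixP => a a'; rewrite (ord1 a) (ord1 a') !mxE.
  under eq_bigr => j _ do rewrite !mxE.
  rewrite /dj -(big_enum_val (fun d => f d * (trq L q m (b * d) + c0))) /=.
  rewrite (bigD1 0) //= (bigD1 x) /= ?Dx ?xn0 // (bigD1 (- x)) /= ?Dnx ?oppr_eq0 ?xn0 ?(eq_sym _ x) ?xnx //.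
  rewrite big1; last first.
    move=> d /andP [/andP [/andP [_ dn0] dnx] dnmx].
    by rewrite /f (negbTE dn0) (negbTE dnx) (negbTE dnmx) mul0r.
  rewrite /f eqxx (negbTE xn0) eqxx oppr_eq0 (negbTE xn0) eqxx orbT.
  rewrite mulr0 tr0 mulrN (trqN _ _ Hp).
  rewrite -/q /= !mul1r add0r addr0 addrACA subrr add0r mulNr mulr_natl mulr2n.
  by rewrite addNr.
have dC3 : (mindist L _ (dualq L q _ (CDbar L q m)) <= 3)%N.
  exact: leq_trans (mindist_le y3D y3n0) wt3.
have dCC : (mindist L _ (dualq L q _ (span_code L q _ _ (row_mx 1%:M (G2 L q m alpha))))
            <= mindist L _ (dualq L q _ (CDbar L q m)))%N.
  apply: mindist_ge.
    apply: leq_trans (mindist_le (dual_lift alpha q_gt0 tr0 y3D) (row_mx0_neq0 _ y3n0)) _.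
    by rewrite wt_row_mx0 wt_le.
  move=> c cD cn0.
  by apply: leq_trans (mindist_le (dual_lift alpha q_gt0 tr0 cD) (row_mx0_neq0 _ cn0)) _; rewrite wt_row_mx0.
have dC2 : (2 <= mindist L _ (dualq L q _ (span_code L q _ _ (row_mx 1%:M (G2 L q m alpha)))))%N.
  apply: mindist_ge; last by move=> c cD cn0; apply: dual_wt2 cD cn0.
  by rewrite addSn ltnS; apply: leq_trans (leq_addr _ _); apply: leq_trans m_ge3.
apply/andP; split => //.
by apply: leq_trans dC3 _; rewrite ltnS.
Qed.
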